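(* The VCCR $isc$ does not refine Split Cycle (there is a linear profile $\mathbf P$ with $sc(\mathbf P)\not\subseteq isc(\mathbf P)$), and $isc$ fails Positive Involvement in Defeat. Moreover, the VSCC $ISC=\overline{isc}$ fails Tolerant Positive Involvement.
   Context: Profiles: $\mathbf P:V\to\mathcal L(X)$, $V$ nonempty finite set of voters, $X=X(\mathbf P)$ nonempty finite set of candidates, $\mathcal L(X)$ strict linear orders. $\mathrm{Margin}_{\mathbf P}(x,y)$ = #voters ranking $x$ above $y$ minus #ranking $y$ above $x$; $x$ majority preferred to $y$ if $>0$. $\mathcal M(\mathbf P)$: directed graph on $X(\mathbf P)$ with edge $x\to y$ of weight $\mathrm{Margin}_{\mathbf P}(x,y)$ when positive; majority paths are paths in it, the strength of a path being its minimum edge weight. $(x,y)\in sc(\mathbf P)$ iff $\mathrm{Margin}_{\mathbf P}(x,y)>0$ exceeds the strength of every majority path from $y$ to $x$. Ignore-source strength: for a simple path $\rho$ from $a$ to $b$, $\mathrm{Strength}^{is}(\rho)$ is the minimum weight of edges of $\rho$ not starting at $a$ (minimum of the empty set is $\infty$); $\mathrm{Strength}^{is}(a,b)$ is the maximum over majority paths $\rho$ from $a$ to $b$ (maximum of the empty set is $0$). $(x,y)\in isc(\mathbf P)$ iff $\mathrm{Margin}_{\mathbf P}(x,y)>\mathrm{Strength}^{is}(y,x)$; $ISC(\mathbf P)$ = set of candidates not defeated in $isc(\mathbf P)$. Positive Involvement in Defeat (VCCR $f$): if $(x,y)\notin f(\mathbf P)$ and $\mathbf P'$ adds one new voter ranking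 $y$ above $x$, then $(x,y)\notin f(\mathbf P')$. Tolerant Positive Involvement (VSCC $F$): if $x\in F(\mathbf P)$ and $\mathbf P'$ adds one new voter ranking $x$ above every other candidate $y$ to which $x$ is not majority preferred in $\mathbf P$, then $x\in F(\mathbf P')$. *)

(* Defs.v *)
From mathcomp Require Import all_boot all_order all_algebra.
Set Implicit Arguments. Unset Strict Implicit. Unset Printing Implicit Defensive.
Import Order.TTheory GRing.Theory Num.Theory.
Local Open Scope ring_scope.

Section Voting.
Variable X : finType.

(* A ballot is a strict linear order on the candidates: [R x y] = x ranked above y. *)
Definition is_linear (R : rel X) : Prop :=
  [/\ irreflexive R, transitive R & forall x y, x != y -> R x y || R y x].

Definition is_profile (V : finType) (P : V -> rel X) : Prop :=
  (0 < #|V|)%N /\ (0 < #|X|)%N /\ forall v, is_linear (P v).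

Definition margin (V : finType) (P : V -> rel X) (x y : X) : int :=
  (#|[set v | P v x y]|%:Z - #|[set v | P v y x]|%:Z).

Definition add_voter (V : finType) (P : V -> rel X) (b : rel X) : option V -> rel X :=
  fun o => if o is Some v then P v else b.

(* Extended integers: [None] stands for +infinity. *)
Fixpoint min_ext (s : seq int) : option int :=
  match s with
  | [::] => None
  | k :: s' => Some (if min_ext s' is Some m then Num.min k m else k)
  end.

Definition max_ext (a b : option int) : option int :=
  match a, b with
  | Some m, Some n => Some (Num.max m n)
  | _, _ => None
  end.

Definition gt_ext (m : int) (s : option int) : bool :=
  if s is Some k then k < m else false.

Section Prof.
Variables (V : finType) (P : V -> rel X).

(* A simple majority path from a to b, given by its vertices after a. *)
Definition majority_path (a b : X) (p : seq X) : bool :=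
  [&& path (fun u v => 0 < margin P u v) a p, uniq (a :: p) & last a p == b].

Definition edges (a : X) (p : seq X) : seq (X * X) := zip (a :: p) p.

Definition strength (a : X) (p : seq X) : option int :=
  min_ext [seq margin P e.1 e.2 | e <- edges a p].

Definition strength_is (a : X) (p : seq X) : option int :=
  min_ext [seq margin P e.1 e.2 | e <- edges a p & e.1 != a].

Definition all_uniq_seqs : seq (seq X) :=
  flatten [seq permutations (enum A) | A : {set X}].

(* Strength^is(a,b): maximum over majority paths (max of empty set = 0). *)
Definition Strength_is (a b : X) : option int :=
  \big[max_ext/Some 0]_(p <- undup all_uniq_seqs | majority_path a b p) strength_is a p.

Definition sc (x y : X) : Prop :=
  0 < margin P x y /\
  forall p, majority_path y x p -> gt_ext (margin P x y) (strength y p).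

Definition isc (x y : X) : Prop := gt_ext (margin P x y) (Strength_is y x).

Definition ISC (x : X) : Prop := forall y, ~ isc y x.

End Prof.
End Voting.

(* Main.v *)
Require Import Defs.
From mathcomp Require Import all_boot all_order all_algebra.
Import Order.TTheory GRing.Theory Num.Theory.
Set Implicit Arguments. Unset Strict Implicit.
Local Open Scope ring_scope.

Definition ext_le (a b : option int) : bool :=
  match b, a with None, _ => true | Some _, None => false | Some y, Some x => x <= y end.

Lemma ext_le_trans a b c : ext_le a b -> ext_le b c -> ext_le a c.
Proof. case: a b c => [x|] [y|] [z|] //=; exact: le_trans. Qed.

Lemma max_ub1 a b : ext_le a (max_ext a b).
Proof. case: a b => [x|] [y|] //=; by rewrite le_max lexx. Qed.
Lemma max_ub2 a b : ext_le b (max_ext a b).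
Proof. case: a b => [x|] [y|] //=; by rewrite le_max lexx orbT. Qed.
Lemma max_lub a b c : ext_le a c -> ext_le b c -> ext_le (max_ext a b) c.
Proof. case: a b c => [x|] [y|] [z|] //= h1 h2; by rewrite ge_max h1 h2. Qed.

Lemma big_ub (T : eqType) (r : seq T) (Pr : pred T) (F : T -> option int) q :
  q \in r -> Pr q -> ext_le (F q) (\big[max_ext/Some 0]_(i <- r | Pr i) F i).
Proof.
elim: r => //= h r IH; rewrite in_cons => /orP [/eqP <- | qr] Pq; rewrite big_cons.
  by rewrite Pq max_ub1.
case: (Pr h); last exact: IH.
exact: ext_le_trans (IH qr Pq) (max_ub2 _ _).
Qed.

Section G.
Variables (X V : finType) (P : V -> rel X).

Lemma mem_all_uniq (p : seq X) : uniq p -> p \in undup (all_uniq_seqs X).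
Proof.
move=> up; rewrite mem_undup; apply/flattenP.
exists (permutations (enum [set z in p])).
  by apply: map_f; rewrite mem_enum.
rewrite mem_permutations; apply: uniq_perm => //; first exact: enum_uniq.
by move=> z; rewrite mem_enum inE.
Qed.

Lemma Sis_lb a b p : majority_path P a b p -> ext_le (strength_is P a p) (Strength_is P a b).
Proof.
move=> mp; apply: big_ub => //; apply: mem_all_uniq.
by case/and3P: mp => _ /andP [].
Qed.

Lemma Sis_ub a b s : 0 <= s ->
  (forall p, majority_path P a b p -> ext_le (strength_is P a p) (Some s)) ->
  ext_le (Strength_is P a b) (Some s).
Proof.
move=> s0 H; rewrite /Strength_is.
apply: (big_ind (fun x => ext_le x (Some s))) => //.
  by move=> x y; apply: max_lub.
Qed.

Lemma not_isc x y p : majority_path P y x p -> ext_le (Some (margin P x y)) (strength_is P y p) ->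
  ~ isc P x y.
Proof.
move=> mp le; have := ext_le_trans le (Sis_lb mp); rewrite /isc.
case: (Strength_is P y x) => //= k; by rewrite leNgt => /negP.
Qed.

Lemma isc_of x y s : 0 <= s -> s < margin P x y ->
  (forall p, majority_path P y x p -> ext_le (strength_is P y p) (Some s)) -> isc P x y.
Proof.
move=> s0 sm H; have := Sis_ub s0 H; rewrite /isc.
case: (Strength_is P y x) => //= k ks; exact: le_lt_trans ks sm.
Qed.

Lemma cnt (p : pred V) : #|[set v | p v]| = count p (Finite.enum V).
Proof. by rewrite cardsE cardE -size_filter /enum_mem. Qed.

Lemma mp_eq (m : X -> X -> int) : (forall u v, margin P u v = m u v) ->
  forall a b p, majority_path P a b p =
   [&& path (fun u v => 0 < m u v) a p, uniq (a :: p) & last a p == b].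
Proof.
move=> hm a b p; rewrite /majority_path (@eq_path _ _ (fun u v => 0 < m u v)) //.
by move=> u v; rewrite hm.
Qed.

Lemma sis_eq (m : X -> X -> int) : (forall u v, margin P u v = m u v) ->
  forall a p, strength_is P a p = min_ext [seq m e.1 e.2 | e <- edges a p & e.1 != a].
Proof. by move=> hm a p; rewrite /strength_is; congr min_ext; apply: eq_map => e; rewrite hm. Qed.

Lemma s_eq (m : X -> X -> int) : (forall u v, margin P u v = m u v) ->
  forall a p, strength P a p = min_ext [seq m e.1 e.2 | e <- edges a p].
Proof. by move=> hm a p; rewrite /strength; congr min_ext; apply: eq_map => e; rewrite hm. Qed.
End G.

Lemma cnt_opt (T : finType) (p : pred (option T)) :
  count p (Finite.enum (option T)) = (p None + count (p \o Some) (Finite.enum T))%N.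
Proof. by rewrite [in LHS]unlock /= count_map. Qed.
Lemma cnt_ord n (q : pred nat) : count (fun v : 'I_n => q (val v)) (Finite.enum 'I_n) = count q (iota 0 n).
Proof. by rewrite -enumT -val_enum_ord count_map. Qed.

Definition idxrel (s : seq nat) (i j : nat) : bool := (index i s < index j s)%N.
Definition ballots : seq (seq nat) := [:: [:: 1;0;2]; [::0;2;1]; [::1;0;2]; [::2;1;0]; [::0;2;1]; [::0;2;1]; [::2;1;0]]%N.
Definition bal (s : seq nat) : rel 'I_3 := fun x y => idxrel s (val x) (val y).
Definition P0 (v : 'I_7) : rel 'I_3 := bal (nth [::] ballots (val v)).
Definition bs : seq nat := [:: 0; 1; 2]%N.
Definition b0 := bal bs.
Definition cntb (i j : nat) := count (fun k => idxrel (nth [::] ballots k) i j) (iota 0 7).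
Definition M (i j : nat) : int := (cntb i j)%:Z - (cntb j i)%:Z.
Definition M' (i j : nat) : int := (idxrel bs i j + cntb i j)%N%:Z - (idxrel bs j i + cntb j i)%N%:Z.

Definition c0 : 'I_3 := @Ordinal 3 0 isT.
Definition c1 : 'I_3 := @Ordinal 3 1 isT.
Definition c2 : 'I_3 := @Ordinal 3 2 isT.

Lemma mP u v : margin P0 u v = M (val u) (val v).
Proof. by rewrite /margin !cnt /M /cntb !(cnt_ord 7 (fun k => idxrel (nth [::] ballots k) _ _)). Qed.

Lemma mP' u v : margin (add_voter P0 b0) u v = M' (val u) (val v).
Proof. by rewrite /margin !cnt !cnt_opt /M' /cntb !(cnt_ord 7 (fun k => idxrel (nth [::] ballots k) _ _)). Qed.

Lemma uniq3 (s : seq 'I_3) : uniq s -> (size s <= 3)%N.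
Proof.
move=> us; have := uniq_leq_size us (s2 := enum 'I_3).
by rewrite size_enum_ord; apply=> z; rewrite mem_enum.
Qed.

Lemma bal_lin s : perm_eq s (iota 0 3) -> is_linear (bal s).
Proof.
move=> ps; split.
- by move=> x; rewrite /bal /idxrel ltnn.
- by move=> x y z; rewrite /bal /idxrel; apply: ltn_trans.
- move=> x y nxy; rewrite /bal /idxrel -neq_ltn; apply: contra nxy => /eqP e.
  have hx : val x \in s by rewrite (perm_mem ps) mem_iota /= ltn_ord.
  have hy : val y \in s by rewrite (perm_mem ps) mem_iota /= ltn_ord.
  by apply/eqP/val_inj; rewrite -(nth_index 0 hx) e nth_index.
Qed.

Lemma prof : is_profile P0.
Proof.
split; first by rewrite card_ord.
split; first by rewrite card_ord.
move=> v; apply: bal_lin.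
have : all (fun s => perm_eq s (iota 0 3)) ballots by [].
by move/all_nthP; apply; case: v.
Qed.

Lemma nisc21 : ~ isc P0 c2 c1.
Proof.
apply: (@not_isc _ _ _ _ _ [:: c0; c2]).
  by rewrite (mp_eq mP); vm_compute.
by rewrite (sis_eq mP) mP; vm_compute.
Qed.

Ltac d3 x := case: x => [[|[|[|?]]] ?] //.
Ltac enum3 := let x1 := fresh "x" in let x2 := fresh "x" in let x3 := fresh "x" in
  let x4 := fresh "x" in let p := fresh "p" in
  case => [|x1 [|x2 [|x3 [|x4 p]]]];
  [ | | | | by move/and3P=> [_ /uniq3]];
  try d3 x1; try d3 x2; try d3 x3; vm_compute; try done.

Lemma sc21 : sc P0 c2 c1.
Proof.
split; first by rewrite mP; vm_compute.
move=> p; rewrite (mp_eq mP) (s_eq mP) mP; move: p.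
enum3.
Qed.

Lemma isc'21 : isc (add_voter P0 b0) c2 c1.
Proof.
apply: (@isc_of _ _ _ _ _ 0) => //; first by rewrite mP'; vm_compute.
move=> p; rewrite (mp_eq mP') (sis_eq mP'); move: p.
enum3.
Qed.

Lemma ISC1 : ISC P0 c1.
Proof.
move=> y; case: y => [[|[|[|m]]] Hm] //.
- apply: (@not_isc _ _ _ _ _ [:: c0]).
    by rewrite (mp_eq mP); vm_compute.
  by rewrite (sis_eq mP) mP; vm_compute.
- apply: (@not_isc _ _ _ _ _ [::]).
    by rewrite (mp_eq mP); vm_compute.
  by rewrite (sis_eq mP) mP; vm_compute.
- have -> : Ordinal Hm = c2 by apply: val_inj.
  exact: nisc21.
Qed.

Theorem proposition8p8 :
  (* isc does not refine Split Cycle *)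
  (exists (X V : finType) (P : V -> rel X), is_profile P /\
     exists x y : X, sc P x y /\ ~ isc P x y) /\
  (* isc fails Positive Involvement in Defeat *)
  (exists (X V : finType) (P : V -> rel X) (b : rel X) (x y : X),
     [/\ is_profile P, is_linear b, ~ isc P x y, b y x & isc (add_voter P b) x y]) /\
  (* ISC fails Tolerant Positive Involvement *)
  (exists (X V : finType) (P : V -> rel X) (b : rel X) (x : X),
     [/\ is_profile P, is_linear b, ISC P x,
         (forall y, y != x -> ~ (0 < margin P x y) -> b x y)
       & ~ ISC (add_voter P b) x]).
Proof.
have lb : is_linear b0 by apply: bal_lin.
split; last split.
- exists 'I_3, 'I_7, P0; split; first exact: prof.
  by exists c2, c1; split; [exact: sc21 | exact: nisc21].
- exists 'I_3, 'I_7, P0, b0, c2, c1; split => //; [exact: prof | exact: nisc21 | exact: isc'21].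
- exists 'I_3, 'I_7, P0, b0, c1; split => //; first exact: prof; first exact: ISC1.
  + move=> y; rewrite mP; case: y => [[|[|[|m]]] Hm] //; vm_compute => //.
  + by move/(_ c2); apply; exact: isc'21.
Qed.
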